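(* Let $X_1$ ($n\times p_1$) and $X_2$ ($n\times p_2$), $p_1,p_2>0$, be centered, with $X_1^TX_2=0$ and $(X_1,X_2)$ of full column rank; the response is centered. Consider the models $M_1: y=\alpha\mathbf 1+X_1\beta_1+\epsilon$ and $M_2: y=\alpha\mathbf 1+X_1\beta_1+X_2\beta_2+\epsilon$, $\epsilon\sim N(0,\sigma^2I_n)$, where $M_2$ carries a block hyper-$g$ prior with the two blocks $X_1,X_2$ and $M_1$ carries the block hyper-$g$ prior with the single block $X_1$ (same hyperparameter $a$). Consider the sequence of problems $\Psi_N$ with data $y_N=\alpha\mathbf 1+X_1\beta_{1(N)}+X_2\beta_2+\epsilon$, where $X_1,X_2,\alpha,\beta_2,\epsilon$ are fixed and $\|\beta_{1(N)}\|\to\infty$. Then, as $N\to\infty$, the Bayes factor $BF(M_2:M_1)$ is bounded away from zero.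
   Context: Block hyper-$g$ prior with hyperparameter $2<a\le4$ for blocks $X_1,\dots,X_k$: $\pi(\alpha,\sigma^2)\propto1/\sigma^2$; $\beta\mid g,\sigma^2\sim N(0,A\sigma^2)$ with $A$ block diagonal with blocks $g_i(X_i^TX_i)^{-1}$; $g_1,\dots,g_k$ independent with densities $\frac{a-2}{2}(1+g_i)^{-a/2}$, $g_i>0$. $BF(M_2:M_1)=p(y\mid M_2)/p(y\mid M_1)$ is the ratio of marginal likelihoods. $n>p_1+p_2+1$. *)

(* Defs.v *)
From HB Require Import structures.
From mathcomp Require Import all_boot all_order all_algebra.
From mathcomp Require Import all_classical all_reals all_analysis.
Set Implicit Arguments. Unset Strict Implicit. Unset Printing Implicit Defensive.
Import Order.TTheory GRing.Theory Num.Theory.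
Import numFieldNormedType.Exports.
Local Open Scope classical_set_scope.
Local Open Scope ring_scope.

Section BlockHyperG.
Variable R : realType.

Definition vnorm (k : nat) (b : 'cV[R]_k) : R := Num.sqrt (\sum_i (b i 0) ^+ 2).

Definition centered (n p : nat) (X : 'M[R]_(n, p)) : Prop :=
  (const_mx 1 : 'rV[R]_n) *m X = 0.

Definition center (n : nat) (y : 'cV[R]_n) : 'cV[R]_n :=
  y - const_mx ((\sum_i y i 0) / n%:R).

Definition hyperg_dens (a g : R) : R := (a - 2) / 2 * (1 + g) `^ (- (a / 2)).

(* Marginal density of y given the g's, after integrating out alpha (flat),
   beta ~ N(0, A sigma^2) and sigma^2 (prior 1/sigma^2), up to a
   multiplicative constant depending only on n (common to all models):
     det(I + X A X^T)^(-1/2) * (yc^T (I + X A X^T)^(-1) yc)^(-(n-1)/2),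
   where yc is the centered response. *)
Definition marg_given_g (n p : nat) (X : 'M[R]_(n, p)) (A : 'M[R]_p)
    (y : 'cV[R]_n) : R :=
  let S := (1%:M + X *m A *m X^T) : 'M[R]_n in
  let yc := center y in
  (\det S) `^ (- (1 / 2)) *
  ((yc^T *m invmx S *m yc) 0 0) `^ (- ((n%:R - 1) / 2)).

Definition Ablock1 (n p1 : nat) (X1 : 'M[R]_(n, p1)) (g1 : R) : 'M[R]_p1 :=
  g1 *: invmx (X1^T *m X1).

Definition Ablock2 (n p1 p2 : nat) (X1 : 'M[R]_(n, p1)) (X2 : 'M[R]_(n, p2))
    (g1 g2 : R) : 'M[R]_(p1 + p2) :=
  block_mx (g1 *: invmx (X1^T *m X1)) 0 0 (g2 *: invmx (X2^T *m X2)).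

Definition marglik1 (n p1 : nat) (a : R) (X1 : 'M[R]_(n, p1)) (y : 'cV[R]_n)
  : \bar R :=
  (\int[lebesgue_measure]_(g1 in [set g : R | (0 < g)%R])
     (hyperg_dens a g1 * marg_given_g X1 (Ablock1 X1 g1) y)%:E)%E.

Definition marglik2 (n p1 p2 : nat) (a : R) (X1 : 'M[R]_(n, p1))
    (X2 : 'M[R]_(n, p2)) (y : 'cV[R]_n) : \bar R :=
  (\int[lebesgue_measure]_(g1 in [set g : R | (0 < g)%R])
     \int[lebesgue_measure]_(g2 in [set g : R | (0 < g)%R])
       (hyperg_dens a g1 * hyperg_dens a g2 *
        marg_given_g (row_mx X1 X2) (Ablock2 X1 X2 g1 g2) y)%:E)%E.

End BlockHyperG.

(* Main.v *)
Require Import Defs.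
From HB Require Import structures.
From mathcomp Require Import all_boot all_order all_algebra.
From mathcomp Require Import all_classical all_reals all_analysis.
Import Order.TTheory GRing.Theory Num.Theory.
Import numFieldNormedType.Exports.
Local Open Scope classical_set_scope.
Local Open Scope ring_scope.

From mathcomp Require Import ring lra zify.

Module MxL.
Set Implicit Arguments. Unset Strict Implicit.
Section Mx.
Context {R : realFieldType}.

Lemma sumsq_eq0 (k : nat) (v : 'rV[R]_k) : (v *m v^T) 0 0 = 0 -> v = 0.
Proof.
rewrite !mxE => /eqP; rewrite psumr_eq0; last by move=> j _; rewrite mxE sqr_ge0.
move=> /allP H; apply/rowP => j; rewrite mxE.
have := H j (mem_index_enum j); rewrite mxE mulf_eq0 orbb => /eqP.
by [].
Qed.

Lemma sumsq_ge0 (k : nat) (v : 'rV[R]_k) : 0 <= (v *m v^T) 0 0.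
Proof. by rewrite !mxE; apply: sumr_ge0 => j _; rewrite mxE sqr_ge0. Qed.

Lemma gram_unit (m p : nat) (X : 'M[R]_(m, p)) :
  \rank X = p -> X^T *m X \in unitmx.
Proof.
move=> rX; rewrite -row_free_unit; apply: inj_row_free => v hv.
have hX : row_free X^T by rewrite /row_free mxrank_tr rX.
have : v *m X^T = 0.
  apply: sumsq_eq0.
  by rewrite trmx_mul trmxK mulmxA -(mulmxA v) hv mul0mx mxE.
by move/eqP; rewrite mulmx_free_eq0 // => /eqP.
Qed.

Lemma sylvester (m p : nat) (A : 'M[R]_(m, p)) (B : 'M[R]_(p, m)) :
  \det (1%:M + A *m B) = \det (1%:M + B *m A).
Proof.
have e1 : block_mx 1%:M (-A) B 1%:M =
    block_mx 1%:M 0 B 1%:M *m block_mx 1%:M (-A) 0 (1%:M + B *m A).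
  rewrite mulmx_block !mul1mx ?mul0mx ?mulmx0 ?mulmx1 ?addr0 ?add0r.
  by rewrite mulmxN addrC addrK.
have e2 : block_mx 1%:M (-A) B 1%:M =
    block_mx (1%:M + A *m B) (-A) 0 1%:M *m block_mx 1%:M 0 B 1%:M.
  rewrite mulmx_block !mul1mx ?mul0mx ?mulmx0 ?mulmx1 ?addr0 ?add0r.
  by rewrite mulNmx addrK.
have := congr1 determinant e1; rewrite e2 !det_mulmx det_lblock det_ublock.
by rewrite det_ublock !det1 !mul1r !mulr1.
Qed.

Definition Pm (n p : nat) (X : 'M[R]_(n, p)) : 'M[R]_n :=
  X *m invmx (X^T *m X) *m X^T.
Arguments Pm {n p}.

Lemma Pm_idem (n p : nat) (X : 'M[R]_(n, p)) :
  X^T *m X \in unitmx -> Pm X *m Pm X = Pm X.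
Proof.
move=> U; rewrite /Pm !mulmxA -(mulmxA (X *m invmx (X^T *m X)) X^T X).
by rewrite -(mulmxA (X *m invmx (X^T *m X))) mulmxV // mulmx1.
Qed.

Lemma Pm_tr (n p : nat) (X : 'M[R]_(n, p)) : (Pm X)^T = Pm X.
Proof. by rewrite /Pm !trmx_mul trmxK trmx_inv trmx_mul trmxK mulmxA. Qed.

Lemma Pm_orth (n p q : nat) (X : 'M[R]_(n, p)) (Y : 'M[R]_(n, q)) :
  X^T *m Y = 0 -> Pm X *m Pm Y = 0.
Proof.
move=> O; rewrite /Pm !mulmxA -(mulmxA (X *m invmx (X^T *m X)) X^T Y) O.
by rewrite mulmx0 !mul0mx.
Qed.

Lemma Pm_det (n p : nat) (X : 'M[R]_(n, p)) (g : R) :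
  X^T *m X \in unitmx -> \det (1%:M + g *: Pm X) = (1 + g) ^+ p.
Proof.
move=> U; rewrite /Pm -mulmxA scalemxAr sylvester -scalemxAl -mulmxA mulVmx //.
by rewrite -{1}(scale1r 1%:M) -scalerDl scalemx1 det_scalar.
Qed.

Lemma expand2 (n : nat) (P Q : 'M[R]_n) (a b c d : R) :
  P *m P = P -> Q *m Q = Q -> P *m Q = 0 -> Q *m P = 0 ->
  (1%:M + a *: P + b *: Q) *m (1%:M + c *: P + d *: Q) =
  1%:M + (a + c + a * c) *: P + (b + d + b * d) *: Q.
Proof.
move=> PP QQ PQ QP.
rewrite !mulmxDl !mulmxDr !mul1mx !mulmx1 -!scalemxAl -!scalemxAr PP QQ PQ QP.
apply/matrixP=> i j; rewrite !mxE; ring.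
Qed.

Lemma inv_of (n : nat) (A B : 'M[R]_n) : A *m B = 1%:M -> invmx A = B.
Proof.
move=> AB; have [Au _] := mulmx1_unit AB.
by rewrite -[invmx A]mulmx1 -AB mulmxA mulVmx // mul1mx.
Qed.

Definition qf (n : nat) (w : 'cV[R]_n) (M : 'M[R]_n) : R := (w^T *m M *m w) 0 0.
Arguments qf {n}.

Lemma qfE (n : nat) (w : 'cV[R]_n) (P Q : 'M[R]_n) (a b : R) :
  qf w (1%:M + a *: P + b *: Q) = qf w 1%:M + a * qf w P + b * qf w Q.
Proof.
rewrite /qf !mulmxDr !mulmxDl -!scalemxAr -!scalemxAl !mxE.
by [].
Qed.

Lemma qf_ge0 (n : nat) (w : 'cV[R]_n) (M : 'M[R]_n) :
  M^T = M -> M *m M = M -> 0 <= qf w M.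
Proof.
move=> MT MM; have -> : qf w M = ((w^T *m M) *m (w^T *m M)^T) 0 0.
  by rewrite trmx_mul MT trmxK /qf !mulmxA -(mulmxA _ M M) MM.
exact: sumsq_ge0.
Qed.

Lemma qf1_gt0 (n : nat) (w : 'cV[R]_n) : w != 0 -> 0 < qf w 1%:M.
Proof.
move=> w0; rewrite lt_neqAle eq_sym; apply/andP; split.
  apply/eqP => H; have := @sumsq_eq0 _ (w^T); rewrite trmxK -(mulmx1 (w^T)).
  move=> /(_ H); rewrite mulmx1 => w00; have : w = 0 by rewrite -(trmxK w) w00 trmx0.
  by move=> w1; rewrite w1 eqxx in w0.
by rewrite /qf mulmx1 -{2}(trmxK w) sumsq_ge0.
Qed.

Lemma key_quad (n : nat) (P Q : 'M[R]_n) (w : 'cV[R]_n) (t1 t2 : R) :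
  P^T = P -> Q^T = Q -> P *m P = P -> Q *m Q = Q -> P *m Q = 0 -> Q *m P = 0 ->
  0 <= t1 < 1 -> 0 <= t2 < 1 ->
  qf w (1%:M + (- t1) *: P + (- t2) *: Q) <= qf w (1%:M + (- t1) *: P + 0 *: Q) /\
  (w != 0 -> 0 < qf w (1%:M + (- t1) *: P + (- t2) *: Q)).
Proof.
move=> PT QT PP QQ PQ QP /andP[t10 t11] /andP[t20 t21].
have hP := @qf_ge0 n w P PT PP; have hQ := @qf_ge0 n w Q QT QQ.
have RT : (1%:M + (-1) *: P + (-1) *: Q)^T = 1%:M + (-1) *: P + (-1) *: Q.
  by rewrite !linearD /= !linearZ /= trmx1 PT QT.
have RR : (1%:M + (-1) *: P + (-1) *: Q) *m (1%:M + (-1) *: P + (-1) *: Q)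
    = 1%:M + (-1) *: P + (-1) *: Q.
  by rewrite expand2 // (_ : -1 + -1 + -1 * -1 = -1 :> R) //; ring.
have hR := @qf_ge0 n w _ RT RR; rewrite qfE in hR.
rewrite !qfE; split; first by have := mulr_ge0 t20 hQ; lra.
move=> w0; have := @qf1_gt0 n w w0 => h1.
have a1 : 0 < (1 - t1) * (1 - t2) by apply: mulr_gt0; lra.
have a2 := mulr_gt0 a1 h1.
have b1 : 0 <= (t1 + t2 - t1 * t2) * (qf w 1%:M + -1 * qf w P + -1 * qf w Q).
  by apply: mulr_ge0 => //; nra.
have b2 : 0 <= ((1 - t1) * t2) * qf w P by apply: mulr_ge0 => //; nra.
have b3 : 0 <= ((1 - t2) * t1) * qf w Q by apply: mulr_ge0 => //; nra.
have e : qf w 1%:M + - t1 * qf w P + - t2 * qf w Q =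
  (1 - t1) * (1 - t2) * qf w 1%:M + (t1 + t2 - t1 * t2) * (qf w 1%:M + -1 * qf w P + -1 * qf w Q)
  + ((1 - t1) * t2) * qf w P + ((1 - t2) * t1) * qf w Q by ring.
rewrite e; lra.
Qed.

Lemma rank_split (n p1 p2 : nat) (X1 : 'M[R]_(n, p1)) (X2 : 'M[R]_(n, p2)) :
  \rank (row_mx X1 X2) = (p1 + p2)%N -> \rank X1 = p1 /\ \rank X2 = p2.
Proof.
move=> r; have := mxrank_adds_leqif (X1^T) (X2^T) => /leqifP.
rewrite addsmxE -tr_row_mx !mxrank_tr r.
have := rank_leq_row X1^T; have := rank_leq_row X2^T; rewrite !mxrank_tr.
case: ifP => _ a b c; lia.
Qed.

Lemma block_proj (n p1 p2 : nat) (X1 : 'M[R]_(n, p1)) (X2 : 'M[R]_(n, p2)) g1 g2 :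
  row_mx X1 X2 *m block_mx (g1 *: invmx (X1^T *m X1)) 0 0 (g2 *: invmx (X2^T *m X2))
    *m (row_mx X1 X2)^T = g1 *: Pm X1 + g2 *: Pm X2.
Proof.
rewrite mul_row_block !mulmx0 addr0 add0r tr_row_mx mul_row_col.
by rewrite -!scalemxAr -!scalemxAl.
Qed.

Lemma one_proj (n p1 : nat) (X1 : 'M[R]_(n, p1)) g1 :
  X1 *m (g1 *: invmx (X1^T *m X1)) *m X1^T = g1 *: Pm X1.
Proof. by rewrite -!scalemxAr -!scalemxAl. Qed.

End Mx.

End MxL.
Import MxL.

Section Ints.
Context {R : realType}.
Local Open Scope ereal_scope.
Let mu := (@lebesgue_measure R).

Lemma nm_le_integral (D : set R) (f g : R -> \bar R) :
  (forall x, D x -> 0 <= f x) -> (forall x, D x -> f x <= g x) ->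
  \int[mu]_(x in D) f x <= \int[mu]_(x in D) g x.
Proof.
move=> f0 fg.
have g0 : forall x, D x -> 0 <= g x by move=> x Dx; exact: le_trans (f0 x Dx) (fg x Dx).
rewrite !ge0_integralE//; apply: ereal_sup_le => _ [h hf <-]; exists h => //= x.
apply: le_trans (hf x) _; rewrite /patch; case: ifP => // /[!inE]; exact: fg.
Qed.

Lemma nm_integralZl (D : set R) (f : R -> \bar R) (k : R) : (0 < k)%R ->
  (forall x, D x -> 0 <= f x) ->
  k%:E * \int[mu]_(x in D) f x <= \int[mu]_(x in D) (k%:E * f x).
Proof.
move=> k0 f0.
have kf0 : forall x, D x -> 0 <= k%:E * f x.
  by move=> x Dx; apply: mule_ge0; [rewrite lee_fin ltW|exact: f0].
rewrite -lee_pdivlMl// ge0_integralE//; apply: ge_ereal_sup => _ [h hf <-].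
rewrite lee_pdivlMl// -sintegralrM ge0_integralE//.
apply: ereal_sup_ubound; exists (scale_nnsfun h (ltW k0)) => //= x.
have := hf x; rewrite /patch; case: ifP => _ hx.
  by rewrite EFinM; apply: lee_wpmul2l => //; rewrite lee_fin ltW.
by move: hx; rewrite !lee_fin => hx; rewrite mulr_ge0_le0// ltW.
Qed.

End Ints.

Section Main.
Context {R : realType}.

Lemma powR_decr (x y r : R) : 0 < x -> x <= y -> 0 <= r -> y `^ (- r) <= x `^ (- r).
Proof.
move=> x0 xy r0; rewrite !powRN lef_pV2 ?posrE ?powR_gt0 //; last exact: lt_le_trans xy.
apply: ge0_ler_powR => //; rewrite nnegrE ltW //; exact: lt_le_trans xy.
Qed.

Definition Kc (a : R) (p2 : nat) : R := (a - 2) / 2 * 2 `^ (- (a / 2)) * (2 ^+ p2) `^ (- (1 / 2)).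

Lemma Kc_gt0 (a : R) p2 : 2 < a -> 0 < Kc a p2.
Proof.
move=> a2; rewrite /Kc; apply: mulr_gt0; [apply: mulr_gt0|]; last by apply: powR_gt0; apply: exprn_gt0.
  by apply: divr_gt0 => //; lra.
by apply: powR_gt0.
Qed.

Lemma hyperg_ge0 (a g : R) : 2 < a -> 0 <= hyperg_dens a g.
Proof. by move=> a2; rewrite /hyperg_dens mulr_ge0 ?powR_ge0 // divr_ge0 //; lra. Qed.

Lemma marg_ge0 n p (X : 'M[R]_(n, p)) A (y : 'cV[R]_n) : 0 <= marg_given_g X A y.
Proof. by rewrite /marg_given_g mulr_ge0 ?powR_ge0. Qed.

Lemma hyperg_lb (a g : R) : 2 < a -> 0 < g -> g <= 1 ->
  (a - 2) / 2 * 2 `^ (- (a / 2)) <= hyperg_dens a g.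
Proof.
move=> a2 g0 g1.
rewrite /hyperg_dens; apply: ler_wpM2l; first by rewrite divr_ge0 //; lra.
by apply: powR_decr; [lra|lra|rewrite divr_ge0 //; lra].
Qed.

Lemma pow_lb (g : R) p2 : 0 < g -> g <= 1 ->
  (2 ^+ p2) `^ (- (1 / 2)) <= ((1 + g) ^+ p2) `^ (- (1 / 2)).
Proof.
move=> g0 g1.
apply: powR_decr; [by rewrite exprn_gt0 //; lra| |by rewrite divr_ge0].
by apply: lerXn2r; rewrite ?nnegrE //; lra.
Qed.

Lemma fin_ineq (c2 c3 h1 h2 D1 D2 B1 B2 : R) : 0 <= c2 -> 0 <= c3 -> 0 <= h1 ->
  0 <= D1 -> 0 <= B1 -> c2 <= h2 -> c3 <= D2 -> B1 <= B2 ->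
  c2 * c3 * (h1 * (D1 * B1)) <= h1 * h2 * (D1 * D2 * B2).
Proof.
move=> c2p c3p h1p D1p B1p ch cD BB.
have -> : c2 * c3 * (h1 * (D1 * B1)) = (h1 * D1) * (c2 * (c3 * B1)) by ring.
have -> : h1 * h2 * (D1 * D2 * B2) = (h1 * D1) * (h2 * (D2 * B2)) by ring.
apply: ler_wpM2l; first exact: mulr_ge0.
apply: ler_pM => //; first exact: mulr_ge0.
exact: ler_pM.
Qed.

Lemma pointwise n p1 p2 (a : R) (X1 : 'M[R]_(n, p1)) (X2 : 'M[R]_(n, p2))
    (y : 'cV[R]_n) (g1 g2 : R) :
  (1 < n)%N -> 2 < a -> X1^T *m X1 \in unitmx -> X2^T *m X2 \in unitmx ->
  X1^T *m X2 = 0 -> 0 < g1 -> 0 < g2 -> g2 <= 1 ->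
  Kc a p2 * (hyperg_dens a g1 * marg_given_g X1 (Ablock1 X1 g1) y) <=
  hyperg_dens a g1 * hyperg_dens a g2 *
    marg_given_g (row_mx X1 X2) (Ablock2 X1 X2 g1 g2) y.
Proof.
move=> n1 a2 U1 U2 O g10 g20 g21.
have PT := Pm_tr X1; have QT := Pm_tr X2.
have PP := Pm_idem U1; have QQ := Pm_idem U2.
have PQ := Pm_orth O.
have QP : Pm X2 *m Pm X1 = 0 by apply: Pm_orth; rewrite -(trmxK X1) -trmx_mul O trmx0.
rewrite /marg_given_g /Ablock1 /Ablock2 /= block_proj one_proj.
set P := Pm X1; set Q := Pm X2; set w := Defs.center y.
have d1 : \det (1%:M + g1 *: P) = (1 + g1) ^+ p1 := Pm_det g1 U1.
have S2E : 1%:M + (g1 *: P + g2 *: Q) =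
    (1%:M + g1 *: P + 0 *: Q) *m (1%:M + 0 *: P + g2 *: Q).
  by rewrite expand2 // ?(mulr0, mul0r, addr0, add0r) addrA.
have d2 : \det (1%:M + (g1 *: P + g2 *: Q)) = (1 + g1) ^+ p1 * (1 + g2) ^+ p2.
  by rewrite S2E det_mulmx !scale0r !addr0 d1 Pm_det.
pose t1 := g1 / (1 + g1); pose t2 := g2 / (1 + g2).
have t1E : g1 + - t1 + g1 * - t1 = 0 by rewrite /t1; field; lra.
have t2E : g2 + - t2 + g2 * - t2 = 0 by rewrite /t2; field; lra.
have I1 : invmx (1%:M + g1 *: P) = 1%:M + (- t1) *: P + 0 *: Q.
  apply: inv_of; rewrite -[1%:M + g1 *: P](addr0) -(scale0r Q) expand2 // t1E.
  by rewrite !mulr0 !addr0 !scale0r !addr0.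
have I2 : invmx (1%:M + (g1 *: P + g2 *: Q)) = 1%:M + (- t1) *: P + (- t2) *: Q.
  by apply: inv_of; rewrite addrA expand2 // t1E t2E !scale0r !addr0.
rewrite d1 d2 I1 I2.
have t1r : 0 <= t1 < 1.
  by rewrite /t1 divr_ge0 ?ltr_pdivrMr /=; [lra|lra|lra|lra].
have t2r : 0 <= t2 < 1.
  by rewrite /t2 divr_ge0 ?ltr_pdivrMr /=; [lra|lra|lra|lra].
have [q21 q2p] := key_quad w PT QT PP QQ PQ QP t1r t2r.
set q1 := (w^T *m (1%:M + - t1 *: P + 0 *: Q) *m w) 0 0.
set q2 := (w^T *m (1%:M + - t1 *: P + - t2 *: Q) *m w) 0 0.
have q1E : q1 = qf w (1%:M + - t1 *: P + 0 *: Q) by [].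
have q2E : q2 = qf w (1%:M + - t1 *: P + - t2 *: Q) by [].
rewrite -q1E -q2E in q21 q2p.
set e := (n%:R - 1) / 2.
have e0 : 0 < e by rewrite /e divr_gt0 // subr_gt0 ltr1n.
have h1p := hyperg_ge0 a g1 a2; have h2p := hyperg_ge0 a g2 a2.
rewrite powRM ?exprn_ge0 //; try lra.
have [w0|w0] := eqVneq w 0.
  have -> : q1 = 0 by rewrite /q1 w0 mulmx0 mxE.
  rewrite powR0 ?oppr_eq0 ?gt_eqF // !mulr0.
  by apply: mulr_ge0; [exact: mulr_ge0|rewrite !mulr_ge0 ?powR_ge0].
have q2pos := q2p w0.
have A : q1 `^ (- e) <= q2 `^ (- e) by apply: powR_decr => //; exact: ltW.
have B := hyperg_lb a g2 a2 g20 g21.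
have C := pow_lb g2 p2 g20 g21.
have c2p : 0 <= (a - 2) / 2 * 2 `^ (- (a / 2)).
  by rewrite mulr_ge0 ?powR_ge0 // divr_ge0 // subr_ge0 ltW.
have := @fin_ineq _ _ _ _ _ _ _ _ c2p (powR_ge0 _ _) h1p (powR_ge0 _ _) (powR_ge0 _ _) B C A.
rewrite /Kc.
by move/(_ ((1 + g1) ^+ p1) (- (1 / 2))).
Qed.


Lemma int_box (k : R) : 0 <= k ->
  (\int[lebesgue_measure]_(x in [set g : R | (0 < g)%R]) (k * \1_(`]0, 1]%classic : set R) x)%:E
   = k%:E)%E.
Proof.
move=> k0.
have mD : measurable ([set g : R | 0 < g] : set (measurableTypeR R)).
  have -> : [set g : R | 0 < g] = `]0, +oo[%classic.
    by apply/seteqP; split=> x /=; rewrite in_itv /= andbT.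
  exact: measurable_itv.
have H := @integralZl_indic _ _ _ lebesgue_measure _ mD (fun=> `]0, 1]%classic) k.
rewrite /= in H.
have c0 : (k < 0)%R -> `]0, 1]%classic = (set0 : set R) by rewrite ltNge k0.
have m01 : measurable (`]0, 1]%classic : set (measurableTypeR R)) by exact: measurable_itv.
rewrite (H c0 m01).
rewrite (integral_indic _ mD m01).
rewrite setIidl; last by move=> x /=; rewrite in_itv /= => /andP[].
have L := @lebesgue_measure_itv R `]0%R, 1%R].
rewrite /= lte_fin ltr01 oppr0 adde0 in L.
rewrite -[RHS]mule1; apply: f_equal; exact: L.
Qed.

End Main.

Theorem theorem4p2 (R : realType) (n p1 p2 : nat) (a : R)
    (X1 : 'M[R]_(n, p1)) (X2 : 'M[R]_(n, p2)) (alpha : R)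
    (beta1 : nat -> 'cV[R]_p1) (beta2 : 'cV[R]_p2) (eps : 'cV[R]_n) :
  (0 < p1)%N -> (0 < p2)%N -> (p1 + p2 + 1 < n)%N ->
  2 < a -> a <= 4 ->
  centered X1 -> centered X2 -> X1^T *m X2 = 0 ->
  \rank (row_mx X1 X2) = (p1 + p2)%N ->
  (fun N => vnorm (beta1 N)) @ \oo --> +oo ->
  let y := fun N : nat =>
    alpha *: (const_mx 1 : 'cV[R]_n) + X1 *m beta1 N + X2 *m beta2 + eps in
  exists c : R, 0 < c /\
    \forall N \near \oo,
      (c%:E * marglik1 a X1 (y N) <= marglik2 a X1 X2 (y N))%E.
Proof.
move=> p10 p20 np a2 a4 c1 c2 O rk _ y.
have [r1 r2] := rank_split rk.
have U1 := gram_unit r1; have U2 := gram_unit r2.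
have n1 : (1 < n)%N by apply: leq_ltn_trans np; rewrite addn1.
exists (Kc a p2); split; first exact: Kc_gt0.
apply: nearW => N; set yy := y N.
have K0 := Kc_gt0 a p2 a2.
rewrite /marglik1 /marglik2.
have H1 := nm_integralZl [set g : R | (0 < g)%R]
  (fun g => (hyperg_dens a g * marg_given_g X1 (Ablock1 X1 g) yy)%:E) (Kc a p2) K0
  (fun g _ => (eqbRL (lee_fin _ _) (mulr_ge0 (hyperg_ge0 a g a2) (marg_ge0 _ _ _ _ _)))).
apply: le_trans H1 _.
apply: nm_le_integral => g1 g1D.
  by rewrite -EFinM lee_fin; apply: mulr_ge0; [exact: ltW|apply: mulr_ge0; [exact: hyperg_ge0|exact: marg_ge0]].
rewrite -EFinM -(int_box _ (mulr_ge0 (ltW K0) (mulr_ge0 (hyperg_ge0 a g1 a2) (marg_ge0 _ _ _ _ _)))).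
apply: nm_le_integral => g2 g2D.
  rewrite lee_fin indicE; apply: mulr_ge0; last by case: (_ \in _).
  apply: mulr_ge0; [exact: ltW|apply: mulr_ge0; [exact: hyperg_ge0|exact: marg_ge0]].
rewrite lee_fin indicE; case: (boolP (g2 \in _)) => [|_]; last first.
  rewrite mulr0; apply: mulr_ge0; last exact: marg_ge0.
  by apply: mulr_ge0; exact: hyperg_ge0.
rewrite inE /= in_itv /= => /andP[g20 g21]; rewrite mulr1.
exact: pointwise.
Qed.
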